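(* In the standing setup, let $T$ be a valid partial table and let $(i,b)$ be a position with $T(i,b)=\emptyset$. Then either there exists $x\in B_{i,b}$ such that both $S_i+x$ and $C_b+x$ are independent, or there are at least $n-|C_b|$ columns $c$ that are $(i,b)$-swappable.
   Context: Standing setup: $M$ is a matroid of rank $n$ on ground set $E$; $f\le n$ is a positive integer; for each $i\in\{1,\dots,f\}$ and $j\in\{1,\dots,n\}$, $B_{i,j}$ is a basis of $M$, and the sets $B_{i,j}$ are pairwise disjoint. A valid partial table $T$ assigns to each position $(i,j)\in[f]\times[n]$ either the symbol $\emptyset$ (the position is empty) or an element $T(i,j)\in B_{i,j}$, such that for every row $i$ the set $S_i=\{T(i,j):T(i,j)\ne\emptyset\}$ is independent and for every column $j$ the set $C_j=\{T(i,j):T(i,j)\neq\emptyset\}$ is independent. Notation: for a set $A$ and an element $z$, ''$A+z$ is independent'' means $z\notin A$ and $A\cup\{z\}$ is independent; $A-z$ denotes $A\setminus\{z\}$ for $z\in A$; expressions such as $A-z+w$ are read left to right with the same convention. Definition: given $T(i,b)=\emptyset$, a column $c$ with $T(i,c)=x'\neq\emptyset$ is $(i,b)$-swappable if there is $y\in B_{i,b}$ such that $C_b+y$ and $S_i-x'+y$ are independent; such $y$ is called a witness for the $(i,b)$-swappability of $c$. *)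

(* Defs.v *)
From mathcomp Require Import all_boot.
Set Implicit Arguments. Unset Strict Implicit. Unset Printing Implicit Defensive.

Section Matroid.
Variable E : finType.
Variable indep : {set E} -> bool.

Definition is_matroid : Prop :=
  [/\ indep set0,
      (forall A B : {set E}, A \subset B -> indep B -> indep A) &
      (forall A B : {set E}, indep A -> indep B -> #|A| < #|B| ->
         exists2 x, x \in B :\: A & indep (x |: A))].

Definition is_basis (B : {set E}) : Prop :=
  indep B /\ forall x, x \notin B -> ~~ indep (x |: B).

Definition has_rank (n : nat) : Prop :=
  forall B, is_basis B -> #|B| = n.

Definition indep_add (A : {set E}) (z : E) : bool :=
  (z \notin A) && indep (z |: A).
End Matroid.

Section Table.
Variables (E : finType) (f n : nat).
Variable indep : {set E} -> bool.
Variable B : 'I_f -> 'I_n -> {set E}.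
(* A partial table: None = empty position. *)
Variable T : 'I_f -> 'I_n -> option E.

Definition row_set (i : 'I_f) : {set E} := [set x | [exists j, T i j == Some x]].
Definition col_set (j : 'I_n) : {set E} := [set x | [exists i, T i j == Some x]].

Definition valid_table : Prop :=
  [/\ (forall i j x, T i j = Some x -> x \in B i j),
      (forall i, indep (row_set i)) &
      (forall j, indep (col_set j))].

Definition swappable (i : 'I_f) (b c : 'I_n) : bool :=
  if T i c is Some x' then
    [exists y in B i b,
       indep_add indep (col_set b) y && indep_add indep (row_set i :\ x') y]
  else false.
End Table.

(* Main.v *)
Require Import Defs.
From mathcomp Require Import all_boot.
From mathcomp Require Import zify.
Set Implicit Arguments. Unset Strict Implicit. Unset Printing Implicit Defensive.

Lemma grow (E : finType) (indep : {set E} -> bool) : is_matroid indep ->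
  forall k (A D : {set E}), #|D| - #|A| <= k -> indep A -> indep D ->
  exists I, [/\ indep I, A \subset I, I \subset A :|: D & #|D| <= #|I|].
Proof.
move=> [_ _ Haug]; elim=> [|k IH] A D hk hA hD.
  exists A; split => //; first exact: subsetUl; lia.
case: (leqP #|D| #|A|) => h.
  by exists A; split => //; exact: subsetUl.
have [x /setDP [xD xA] hx] := Haug A D hA hD h.
have cx : #|x |: A| = #|A|.+1 by rewrite cardsU1 xA.
have [I [hI h1 h2 h3]] := IH (x |: A) D ltac:(lia) hx hD.
exists I; split => //.
  by apply: subset_trans h1; exact: subsetU1.
apply: (subset_trans h2); apply/subsetP => z; rewrite !inE.
by case/orP => [/orP [/eqP-> | ->] | ->]; rewrite ?xD ?orbT.
Qed.

Theorem mainTheorem3 (E : finType) (indep : {set E} -> bool) (n f : nat)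
  (B : 'I_f -> 'I_n -> {set E}) (T : 'I_f -> 'I_n -> option E)
  (i : 'I_f) (b : 'I_n) :
  is_matroid indep -> has_rank indep n ->
  0 < f -> f <= n ->
  (forall i' j', is_basis indep (B i' j')) ->
  (forall i1 j1 i2 j2, (i1, j1) != (i2, j2) -> [disjoint B i1 j1 & B i2 j2]) ->
  valid_table indep B T ->
  T i b = None ->
  (exists2 x, x \in B i b &
     indep_add indep (row_set T i) x /\ indep_add indep (col_set T b) x)
  \/ n - #|col_set T b| <= #|[set c | swappable indep B T i b c]|.
Proof.
move=> hM hR _ _ hB hdis [hTB hS hC] hTib.
set S := row_set T i; set C := col_set T b.
have [hM0 hMsub hMaug] := hM.
case: (boolP [exists x in B i b, indep_add indep S x && indep_add indep C x]).
  by case/exists_inP => x xB /andP [h1 h2]; left; exists x.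
rewrite negb_exists_in => /forall_inP hno; right.
have [hBi _] := hB i b.
have cB : #|B i b| = n by apply: hR; exact: hB.
have yS : forall y, y \in B i b -> y \notin S.
  move=> y yB; apply/negP; rewrite inE => /existsP [c /eqP hc].
  have ycB := hTB _ _ _ hc.
  have hcb : c != b by apply/eqP => ecb; rewrite ecb hTib in hc.
  have := hdis i b i c; rewrite xpair_eqE eqxx /= eq_sym hcb => /(_ isT).
  by move/disjointFr => /(_ y yB); rewrite ycB.
have [I [hI hCI hIsub hIc]] := grow hM (leqnn _) (hC b) hBi.
set Y := I :\: C.
have YB : Y \subset B i b.
  apply/subsetP => y; rewrite inE => /andP [yC yI].
  by move/subsetP: hIsub => /(_ y yI); rewrite inE (negbTE yC).
have cY : n - #|C| <= #|Y|.
  have := cardsID C I; rewrite (setIidPr hCI) -/Y; move=> h; rewrite -cB; move: h hIc; rewrite -/C; clear; lia.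
have yCy : forall y, y \in Y -> indep_add indep C y.
  move=> y; rewrite inE => /andP [yC yI]; rewrite /indep_add yC /=.
  apply: hMsub hI; rewrite subUset sub1set yI; exact: hCI.
have ySd : forall y, y \in Y -> ~~ indep (y |: S).
  move=> y yY; have := hno y (subsetP YB y yY).
  by rewrite yCy // andbT /indep_add yS ?(subsetP YB y yY).
set X := [set x' in S | [exists y in Y, indep_add indep (S :\ x') y]].
have XS : X \subset S by apply/subsetP => x; rewrite inE => /andP [].
have cXY : #|Y| <= #|X|.
  rewrite leqNgt; apply/negP => hlt.
  have hX : indep X by apply: hMsub (hS i).
  have hY : indep Y by apply: hMsub hBi.
  have [y /setDP [yY yX] hyX] := hMaug X Y hX hY hlt.
  have [J [hJ hXJ hJsub hJc]] := grow hM (leqnn _) hyX (hS i).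
  have JyS : J \subset y |: S.
    apply: (subset_trans hJsub); rewrite subUset setUS //; exact: subsetU1.
  have yJ : y \in J by apply: (subsetP hXJ); rewrite setU11.
  have : ~~ (y |: S \subset J).
    apply/negP => h; have := ySd y yY.
    by rewrite (_ : y |: S = J) ?hJ //; apply/eqP; rewrite eqEsubset h JyS.
  case/subsetPn => x' x'yS x'J.
  have x'y : x' != y by apply/eqP => e; rewrite e yJ in x'J.
  have x'S : x' \in S by move: x'yS; rewrite in_setU1 (negbTE x'y).
  have x'X : x' \notin X by apply/negP => h; have := subsetP hXJ x'; rewrite in_setU1 h orbT (negbTE x'J); by move/(_ isT).
  have ySx : y \notin S :\ x' by rewrite in_setD1 negb_and yS ?orbT ?(subsetP YB y yY).
  have JE : J = y |: (S :\ x').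
    apply/eqP; rewrite eqEcard; apply/andP; split.
      apply/subsetP => z zJ; rewrite in_setU1 in_setD1.
      move/subsetP: JyS => /(_ z zJ); rewrite in_setU1 => /orP [->//|zS].
      have : z != x' by apply/eqP => e; move: x'J; rewrite -e zJ.
      by move=> ->; rewrite zS orbT.
    have e1 := cardsD1 x' S; rewrite x'S in e1; rewrite cardsU1 ySx; move: e1 hJc; rewrite add1n => -> ; done.
  move: x'X; rewrite inE x'S /=; apply/negP/negPn/exists_inP.
  by exists y => //; rewrite /indep_add ySx -JE.
set Cs := [set c | [exists x' in X, T i c == Some x']].
have cXC : #|X| <= #|Cs|.
  have -> : #|X| = #|Some @: X| by rewrite card_imset //; move=> ? ? [].
  apply: leq_trans (leq_imset_card (T i) Cs).
  apply: subset_leq_card; apply/subsetP => o /imsetP [x xX ->].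
  have := subsetP XS x xX; rewrite inE => /existsP [c /eqP hc].
  apply/imsetP; exists c => //; rewrite inE; apply/exists_inP; exists x => //.
  by rewrite hc.
have CsSw : Cs \subset [set c | swappable indep B T i b c].
  apply/subsetP => c; rewrite !inE => /exists_inP [x xX /eqP hc].
  rewrite /swappable hc; move: xX; rewrite inE => /andP [_ /exists_inP [y yY hy]].
  apply/exists_inP; exists y; first exact: (subsetP YB).
  by rewrite yCy.
have := subset_leq_card CsSw; lia.
Qed.
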